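(* The exact category $\mathfrak{sl}(2)\text{-}\mathrm{Mod}_{\mathrm{tffr}}$ decomposes as the $\mathrm{Hom}$-orthogonal direct sum of the exact subcategories of generalized Casimir modules: $$\mathfrak{sl}(2)\text{-}\mathrm{Mod}_{\mathrm{tffr}}=\bigoplus_{\mu\in\mathbb{C}}\mathcal C^\bullet_{\mu,\mathrm{tffr}},$$ i.e. every finite rank torsion free module is a finite direct sum of $\mathfrak{sl}(2)$-submodules lying in $\mathcal C^\bullet_{\mu,\mathrm{tffr}}$ for pairwise distinct $\mu$, and $\mathrm{Hom}_{\mathfrak{sl}(2)}(A,B)=0$ for $A\in\mathcal C^\bullet_{\mu,\mathrm{tffr}}$, $B\in\mathcal C^\bullet_{\nu,\mathrm{tffr}}$, $\mu\neq\nu$. This is compatible with the coproduct decomposition $\mathcal C_{\mathrm{tffr}}=\coprod_{\mu\in\mathbb{C}}\mathcal C_{\mu,\mathrm{tffr}}$.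
   Context: $\mathfrak{sl}(2)$ has basis $L_{-1}=f$, $L_0=-\tfrac12 h$, $L_1=-e$ for a Chevalley basis $e,f,h$. Every $\mathfrak{sl}(2)$-module $(V,\rho)$ is a $\mathbb{C}[z]$-module via $z\cdot v=\rho(L_0)v$; $\mathfrak{sl}(2)\text{-}\mathrm{Mod}_{\mathrm{tffr}}$ is the full subcategory of modules that are torsion free as $\mathbb{C}[z]$-modules and of finite rank (finite $\mathbb{C}(z)$-dimension of the localization at $\mathbb{C}[z]\setminus\{0\}$), with the exact structure given by short exact sequences of $\mathfrak{sl}(2)$-modules with all terms in it. Casimir operator: $C_\rho=\rho(L_0)(\rho(L_0)-1)-\rho(L_{-1})\rho(L_1)$. $\mathcal C_{\mu,\mathrm{tffr}}$ (resp. $\mathcal C^\bullet_{\mu,\mathrm{tffr}}$) is the full subcategory of finite rank torsion free modules with $C_\rho=\mu\,\mathrm{Id}$ (resp. $(C_\rho-\mu)^n=0$ for some $n\ge1$); $\mathcal C_{\mathrm{tffr}}$ is the full subcategory of finite rank torsion free modules that are Casimir of some level. *)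

(* Defs.v *)
From HB Require Import structures.
From mathcomp Require Import all_boot all_order all_algebra.
From mathcomp Require Import reals complex.
Set Implicit Arguments. Unset Strict Implicit. Unset Printing Implicit Defensive.
Import Order.TTheory GRing.Theory Num.Theory.
Local Open Scope ring_scope.

(* An sl(2)-module structure on a C-vector space V, given by the images of the
   basis L_{-1} = f, L_0 = -h/2, L_1 = -e; these satisfy the relations
   [L_m, L_n] = (m - n) L_{m+n}, which are exactly the sl(2) bracket relations
   in this basis. *)
Record sl2mod (K : nzRingType) (V : lmodType K) := Sl2mod {
  Lm1 : {linear V -> V};
  L0  : {linear V -> V};
  L1  : {linear V -> V};
  rel_0m1 : forall v, L0 (Lm1 v) - Lm1 (L0 v) = Lm1 v;
  rel_1m1 : forall v, L1 (Lm1 v) - Lm1 (L1 v) = 2%:R *: L0 v;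
  rel_01  : forall v, L0 (L1 v) - L1 (L0 v) = - L1 v
}.

Section Defs.
Variables (K : nzRingType) (V : lmodType K) (M : sl2mod V).

(* C[z]-module structure: z . v = L0 v, so p . v = p(L0) v. *)
Definition pact (p : {poly K}) (v : V) : V :=
  \sum_(i < size p) p`_i *: iter i (L0 M) v.

Definition casimir (v : V) : V := L0 M (L0 M v) - L0 M v - Lm1 M (L1 M v).

Definition submodule (S : V -> Prop) : Prop :=
  [/\ S 0, (forall a u w, S u -> S w -> S (a *: u + w)),
      (forall u, S u -> S (Lm1 M u)), (forall u, S u -> S (L0 M u))
    & (forall u, S u -> S (L1 M u))].

Definition torsion_free_on (S : V -> Prop) : Prop :=
  forall (p : {poly K}) v, S v -> p != 0 -> pact p v = 0 -> v = 0.

(* finite rank: there is a bound n on the number of C[z]-linearly independent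
   elements (for torsion free modules this is the C(z)-dimension of the
   localization) *)
Definition finite_rank_on (S : V -> Prop) : Prop :=
  exists n : nat, forall v : 'I_n.+1 -> V, (forall i, S (v i)) ->
    exists c : 'I_n.+1 -> {poly K},
      (exists i, c i != 0) /\ \sum_(i < n.+1) pact (c i) (v i) = 0.

Definition gen_casimir_on (mu : K) (S : V -> Prop) : Prop :=
  exists n : nat, (1 <= n)%N /\
    forall v, S v -> iter n (fun w => casimir w - mu *: w) v = 0.

Definition torsion_free := torsion_free_on (fun _ => True).
Definition finite_rank := finite_rank_on (fun _ => True).
Definition gen_casimir mu := gen_casimir_on mu (fun _ => True).

Definition direct_sum (k : nat) (W : 'I_k -> V -> Prop) : Prop :=
  (forall v, exists w : 'I_k -> V, (forall i, W i (w i)) /\ v = \sum_(i < k) w i)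
  /\ (forall w w' : 'I_k -> V, (forall i, W i (w i)) -> (forall i, W i (w' i)) ->
        \sum_(i < k) w i = \sum_(i < k) w' i -> forall i, w i = w' i).

End Defs.

Definition sl2hom (K : nzRingType) (A B : lmodType K) (MA : sl2mod A) (MB : sl2mod B)
  (phi : {linear A -> B}) : Prop :=
  [/\ forall a, phi (Lm1 MA a) = Lm1 MB (phi a),
      forall a, phi (L0 MA a) = L0 MB (phi a)
    & forall a, phi (L1 MA a) = L1 MB (phi a)].

(* Main.v *)
Require Import Defs.
From HB Require Import structures.
From mathcomp Require Import all_boot all_order all_algebra.
From mathcomp Require Import reals complex.
From mathcomp Require Import ring.
From Stdlib Require Import Classical.
Set Implicit Arguments. Unset Strict Implicit. Unset Printing Implicit Defensive.
Import Order.TTheory GRing.Theory Num.Theory.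
Local Open Scope ring_scope.

Section Gen.
Variables (F : fieldType) (V : lmodType F).

Definition islin (f : V -> V) := forall a u w, f (a *: u + w) = a *: f u + f w.

Section Lin.
Variables (f : V -> V) (fl : islin f).
Lemma lin0 : f 0 = 0.
Proof. by have := fl (-1) 0 0; rewrite scaler0 add0r scaleN1r addNr. Qed.
Lemma linD u w : f (u + w) = f u + f w.
Proof. by have := fl 1 u w; rewrite !scale1r. Qed.
Lemma linZ a u : f (a *: u) = a *: f u.
Proof. by have := fl a u 0; rewrite !addr0 lin0 addr0. Qed.
Lemma linN u : f (- u) = - f u.
Proof. by rewrite -scaleN1r linZ scaleN1r. Qed.
Lemma linB u w : f (u - w) = f u - f w.
Proof. by rewrite linD linN. Qed.
Lemma lin_sum (I : Type) (r : seq I) (P : pred I) (G : I -> V) :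
  f (\sum_(i <- r | P i) G i) = \sum_(i <- r | P i) f (G i).
Proof. exact: (big_morph f linD lin0). Qed.
Lemma iter_lin n : islin (iter n f).
Proof.
elim: n => [//|n IH] a u w /=. by rewrite IH fl.
Qed.
End Lin.

Lemma islin_comp f g : islin f -> islin g -> islin (fun v => f (g v)).
Proof. by move=> hf hg a u w; rewrite hg hf. Qed.

Definition opact (f : V -> V) (p : {poly F}) (v : V) : V :=
  \sum_(i < size p) p`_i *: iter i f v.

Section Opact.
Variables (f : V -> V) (fl : islin f).

Lemma opact_size n (p : {poly F}) (v : V) : (size p <= n)%N ->
  opact f p v = \sum_(i < n) p`_i *: iter i f v.
Proof.
move=> hn; rewrite /opact (big_ord_widen n (fun i => p`_i *: iter i f v)) //.
rewrite big_mkcond /=; apply: eq_bigr => i _; case: ifP => // /negbT.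
by rewrite -leqNgt => H; rewrite nth_default // scale0r.
Qed.

Lemma opactD (p q : {poly F}) (v : V) : opact f (p + q) v = opact f p v + opact f q v.
Proof.
rewrite (@opact_size (maxn (size p) (size q))) ?size_polyD //.
rewrite (@opact_size (maxn (size p) (size q)) p) ?leq_maxl //.
rewrite (@opact_size (maxn (size p) (size q)) q) ?leq_maxr //.
by rewrite -big_split; apply: eq_bigr => i _; rewrite coefD scalerDl.
Qed.

Lemma opactZ c (p : {poly F}) (v : V) : opact f (c *: p) v = c *: opact f p v.
Proof.
rewrite (@opact_size (size p)) ?size_scale_leq // /opact scaler_sumr.
by apply: eq_bigr => i _; rewrite coefZ scalerA.
Qed.

Lemma opact0 (v : V) : opact f 0 v = 0.
Proof. by rewrite /opact size_poly0 big_ord0. Qed.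

Lemma opactN (p : {poly F}) (v : V) : opact f (- p) v = - opact f p v.
Proof. by rewrite -(scaleN1r p) opactZ scaleN1r. Qed.

Lemma opactB (p q : {poly F}) (v : V) : opact f (p - q) v = opact f p v - opact f q v.
Proof. by rewrite opactD opactN. Qed.

Lemma opact_sum (I : Type) (r : seq I) (P : pred I) (G : I -> {poly F}) v :
  opact f (\sum_(i <- r | P i) G i) v = \sum_(i <- r | P i) opact f (G i) v.
Proof. exact: (big_morph (fun p => opact f p v) (fun p q => opactD p q v) (opact0 v)). Qed.

Lemma opactC c (v : V) : opact f c%:P v = c *: v.
Proof.
rewrite (@opact_size 1) ?size_polyC ?leq_b1 // big_ord1 coefC /=. by [].
Qed.

Lemma opact1 (v : V) : opact f 1 v = v.
Proof. by rewrite -polyC1 opactC scale1r. Qed.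

Lemma opact_lin (p : {poly F}) : islin (opact f p).
Proof.
move=> a u w; rewrite /opact scaler_sumr -big_split; apply: eq_bigr => i _ /=.
by rewrite iter_lin // scalerDr !scalerA mulrC.
Qed.

Lemma opactvD (p : {poly F}) u w : opact f p (u + w) = opact f p u + opact f p w.
Proof. exact: linD (opact_lin p) u w. Qed.
Lemma opactvZ (p : {poly F}) a u : opact f p (a *: u) = a *: opact f p u.
Proof. exact: linZ (opact_lin p) a u. Qed.
Lemma opactv0 (p : {poly F}) : opact f p 0 = 0.
Proof. exact: lin0 (opact_lin p). Qed.
Lemma opactvN (p : {poly F}) u : opact f p (- u) = - opact f p u.
Proof. exact: linN (opact_lin p) u. Qed.
Lemma opactvB (p : {poly F}) u w : opact f p (u - w) = opact f p u - opact f p w.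
Proof. exact: linB (opact_lin p) u w. Qed.
Lemma opactv_sum (p : {poly F}) (I : Type) (r : seq I) (P : pred I) (G : I -> V) :
  opact f p (\sum_(i <- r | P i) G i) = \sum_(i <- r | P i) opact f p (G i).
Proof. by rewrite (lin_sum (opact_lin p)). Qed.

Lemma opact_comm (g : V -> V) (p : {poly F}) (v : V) : islin g -> (forall u, g (f u) = f (g u)) ->
  g (opact f p v) = opact f p (g v).
Proof.
move=> gl hc; rewrite /opact lin_sum //; apply: eq_bigr => i _.
rewrite linZ //; congr (_ *: _); elim: (nat_of_ord i) => [//|j IH] /=.
by rewrite hc IH.
Qed.

Lemma opactMX (p : {poly F}) (v : V) : opact f (p * 'X) v = opact f p (f v).
Proof.
rewrite (@opact_size (size p).+1); last first.
  by apply: leq_trans (size_polyMleq _ _) _; rewrite size_polyX addn2.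
rewrite big_ord_recl coefMX eqxx scale0r add0r /opact.
by apply: eq_bigr => i _; rewrite coefMX /= -iterSr.
Qed.

Lemma opactX (v : V) : opact f 'X v = f v.
Proof. by rewrite -(mul1r 'X) opactMX opact1. Qed.

Lemma opactM (p q : {poly F}) (v : V) : opact f (p * q) v = opact f p (opact f q v).
Proof.
elim/poly_ind: p v => [|p c IH] v; first by rewrite mul0r !opact0.
rewrite mulrDl opactD -mulrA (mulrC 'X) mulrA.
rewrite opactMX IH mul_polyC opactZ opactD opactMX opactC.
by rewrite (opact_comm _ _ fl).
Qed.

Lemma opact_shift (g : V -> V) (a : F) (p : {poly F}) (v : V) : islin g ->
  (forall u, g (f u) = f (g u) + a *: g u) ->
  g (opact f p v) = opact f (p \Po ('X + a%:P)) (g v).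
Proof.
move=> gl hc; elim/poly_ind: p v => [|p c IH] v.
  by rewrite !opact0 comp_poly0 opact0 lin0.
rewrite opactD opactMX opactC linD // linZ // IH hc.
rewrite comp_polyD comp_polyM comp_polyX comp_polyC opactD opactC.
rewrite mulrDr opactD opactMX mulrC opactM // opactC.
by rewrite opactvD opactvZ.
Qed.

End Opact.
End Gen.

Section Gen2.
Variables (F : fieldType) (V : lmodType F).
Definition Pop (f g : V -> V) (P : {poly {poly F}}) (v : V) : V :=
  \sum_(j < size P) opact f (P`_j) (iter j g v).

Variables (f g : V -> V) (fl : islin f) (gl : islin g)
  (hfg : forall u, f (g u) = g (f u)).

Lemma Pop_size n (P : {poly {poly F}}) (v : V) : (size P <= n)%N ->
  Pop f g P v = \sum_(j < n) opact f (P`_j) (iter j g v).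
Proof.
move=> hn; rewrite /Pop (big_ord_widen n (fun j => opact f (P`_j) (iter j g v))) //.
rewrite big_mkcond /=; apply: eq_bigr => i _; case: ifP => // /negbT.
by rewrite -leqNgt => H; rewrite nth_default // opact0.
Qed.

Lemma PopD (P Q : {poly {poly F}}) v : Pop f g (P + Q) v = Pop f g P v + Pop f g Q v.
Proof.
rewrite (@Pop_size (maxn (size P) (size Q))) ?size_polyD //.
rewrite (@Pop_size (maxn (size P) (size Q)) P) ?leq_maxl //.
rewrite (@Pop_size (maxn (size P) (size Q)) Q) ?leq_maxr //.
by rewrite -big_split; apply: eq_bigr => i _; rewrite coefD opactD.
Qed.

Lemma Pop0 v : Pop f g 0 v = 0.
Proof. by rewrite /Pop size_poly0 big_ord0. Qed.

Lemma Pop_lin (P : {poly {poly F}}) : islin (Pop f g P).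
Proof.
move=> a u w; rewrite /Pop scaler_sumr -big_split; apply: eq_bigr => i _ /=.
by rewrite iter_lin // opact_lin.
Qed.

Lemma PopN (P : {poly {poly F}}) v : Pop f g (- P) v = - Pop f g P v.
Proof. by apply/eqP; rewrite -addr_eq0 -PopD addNr Pop0. Qed.

Lemma PopB (P Q : {poly {poly F}}) v : Pop f g (P - Q) v = Pop f g P v - Pop f g Q v.
Proof. by rewrite PopD PopN. Qed.

Lemma Pop_comm (h : V -> V) (P : {poly {poly F}}) v : islin h ->
  (forall u, h (f u) = f (h u)) -> (forall u, h (g u) = g (h u)) ->
  h (Pop f g P v) = Pop f g P (h v).
Proof.
move=> hl hf hg; rewrite /Pop lin_sum //; apply: eq_bigr => i _.
rewrite (opact_comm _ _ hl hf); congr opact.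
by elim: (nat_of_ord i) => [//|j IH] /=; rewrite hg IH.
Qed.

Lemma PopMX (P : {poly {poly F}}) v : Pop f g (P * 'X) v = Pop f g P (g v).
Proof.
rewrite (@Pop_size (size P).+1); last first.
  by apply: leq_trans (size_polyMleq _ _) _; rewrite size_polyX addn2.
rewrite big_ord_recl coefMX eqxx opact0 add0r /Pop.
by apply: eq_bigr => i _; rewrite coefMX /= -iterSr.
Qed.

Lemma PopC (c : {poly F}) v : Pop f g c%:P v = opact f c v.
Proof. by rewrite (@Pop_size 1) ?size_polyC ?leq_b1 // big_ord1 coefC. Qed.

Lemma PopCM (c : {poly F}) (Q : {poly {poly F}}) v :
  Pop f g (c%:P * Q) v = opact f c (Pop f g Q v).
Proof.
rewrite (@Pop_size (size Q)); last first.
  apply: leq_trans (size_polyMleq _ _) _.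
  by rewrite size_polyC; case: (c != 0) => /=; rewrite ?add1n ?add0n ?leq_pred.
rewrite /Pop (opactv_sum fl); apply: eq_bigr => i _.
by rewrite coefCM (opactM fl).
Qed.

Lemma PopM (P Q : {poly {poly F}}) v : Pop f g (P * Q) v = Pop f g P (Pop f g Q v).
Proof.
elim/poly_ind: P v => [|P c IH] v; first by rewrite mul0r !Pop0.
rewrite mulrDl PopD -mulrA (mulrC 'X) mulrA PopMX IH PopCM PopD PopMX PopC.
by rewrite (@Pop_comm g) // => u; rewrite hfg.
Qed.

Lemma Pop_shift (h : V -> V) (a : F) (P : {poly {poly F}}) v : islin h ->
  (forall u, h (f u) = f (h u) + a *: h u) -> (forall u, h (g u) = g (h u)) ->
  h (Pop f g P v) = Pop f g (map_poly (comp_poly ('X + a%:P)) P) (h v).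
Proof.
move=> hl hf hg; rewrite [RHS](@Pop_size (size P)); last first.
  apply/leq_sizeP => j hj; rewrite coef_map_id0 ?comp_poly0 //.
  by rewrite nth_default // comp_poly0.
rewrite /Pop lin_sum //; apply: eq_bigr => i _.
rewrite coef_map_id0 ?comp_poly0 // (opact_shift fl _ _ hl hf); congr opact.
by elim: (nat_of_ord i) => [//|j IH] /=; rewrite hg IH.
Qed.

Lemma Pop_eval (q : {poly F}) (P : {poly {poly F}}) w :
  g w = opact f q w -> Pop f g P w = opact f (P.[q]) w.
Proof.
move=> hw.
have hj j : iter j g w = opact f (q ^+ j) w.
  elim: j => [|j IH] /=; first by rewrite expr0 opact1.
  rewrite IH (opact_comm _ _ gl); last by move=> u; rewrite hfg.
  by rewrite hw exprSr (opactM fl).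
rewrite horner_coef opact_sum /Pop; apply: eq_bigr => i _.
by rewrite hj (opactM fl).
Qed.

Lemma Pop_const (p : {poly F}) v : Pop f g (map_poly polyC p) v = opact g p v.
Proof.
rewrite (@Pop_size (size p)); last by rewrite size_map_polyC.
rewrite [RHS]/opact; apply: eq_bigr => i _; rewrite coef_map /= opactC.
reflexivity.
Qed.

End Gen2.

Section SL2.
Variables (K : fieldType) (V : lmodType K) (M : sl2mod V).
Local Notation Lm := (Lm1 M).
Local Notation L := (L0 M).
Local Notation Lp := (L1 M).
Local Notation Om := (casimir M).

Lemma Lm_lin : islin Lm. Proof. by move=> a u w; rewrite linearP. Qed.
Lemma L_lin : islin L. Proof. by move=> a u w; rewrite linearP. Qed.
Lemma Lp_lin : islin Lp. Proof. by move=> a u w; rewrite linearP. Qed.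
Lemma Om_lin : islin Om.
Proof.
move=> a u w; rewrite /casimir !(linearD, linearZ) /=.
by rewrite (addrACA (a *: L (L u))) (addrACA (a *: L (L u) + a *: - L u)).
Qed.

Lemma LmL u : Lm (L u) = L (Lm u) - Lm u.
Proof. by have := rel_0m1 M u; move/eqP; rewrite subr_eq addrC -subr_eq => /eqP. Qed.
Lemma LmL' u : Lm (L u) = L (Lm u) + (-1) *: Lm u.
Proof. by rewrite LmL scaleN1r. Qed.
Lemma LpL u : Lp (L u) = L (Lp u) + Lp u.
Proof. by have := rel_01 M u; move/eqP; rewrite subr_eq addrC -subr_eq opprK => /eqP. Qed.
Lemma LpL' u : Lp (L u) = L (Lp u) + 1 *: Lp u.
Proof. by rewrite LpL scale1r. Qed.
Lemma LpLm u : Lp (Lm u) = Lm (Lp u) + 2%:R *: L u.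
Proof. by have := rel_1m1 M u; move/eqP; rewrite subr_eq addrC => /eqP. Qed.

Lemma OmB u : Om u = L (L u) + L u - Lp (Lm u).
Proof.
rewrite /casimir LpLm scaler_nat mulr2n !opprD !addrA.
by rewrite [in RHS](addrAC _ (- Lm _)) addrK addrAC.
Qed.

Lemma OmL u : Om (L u) = L (Om u).
Proof.
rewrite /casimir LpL linearD LmL !linearB subrK //.
Qed.

Lemma OmLm u : Om (Lm u) = Lm (Om u).
Proof.
rewrite [in RHS]OmB /casimir linearB linearD; congr (_ - _).
by rewrite LmL subrK LmL linearB.
Qed.

Lemma OmLp u : Om (Lp u) = Lp (Om u).
Proof.
rewrite OmB /casimir !linearB; congr (_ - _).
by rewrite LpL addrK LpL linearD.
Qed.

End SL2.

Lemma max_exists (Pr : nat -> Prop) n : Pr 0%N -> (forall m, Pr m -> (m <= n)%N) ->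
  exists r, Pr r /\ forall m, Pr m -> (m <= r)%N.
Proof.
elim: n => [|n IH] h0 hb.
  by exists 0%N; split => // m /hb.
case: (classic (Pr n.+1)) => hn.
  by exists n.+1; split => // m /hb.
apply: IH => // m hm; have := hb m hm; rewrite leq_eqVlt => /orP [/eqP E|] //.
by subst m.
Qed.

Lemma min_exists (Pr : nat -> Prop) : (exists n, Pr n) ->
  exists r, Pr r /\ forall m, Pr m -> (r <= m)%N.
Proof.
move=> [n hn]; apply: NNPP => H.
suff : forall k m, (m <= k)%N -> ~ Pr m by move/(_ n n (leqnn n)).
elim=> [|k IH] m hm hPm.
  apply: H; exists m; split => // m' _; by rewrite leqn0 in hm; rewrite (eqP hm).
apply: H; exists m; split => // m' hm'; rewrite leqNgt; apply/negP => lt.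
by apply: (IH m') => //; rewrite -ltnS (leq_trans lt hm).
Qed.

Section Main.
Variables (K : numClosedFieldType) (V : lmodType K) (M : sl2mod V)
  (htf : torsion_free M) (hfr : finite_rank M).
Local Notation Lm := (Lm1 M).
Local Notation L := (L0 M).
Local Notation Lp := (L1 M).
Local Notation Om := (casimir M).

Lemma tf (p : {poly K}) v : p != 0 -> opact L p v = 0 -> v = 0.
Proof. by move=> hp h; exact: (htf (p := p) (v := v) I hp h). Qed.

Definition indep m (e : nat -> V) := forall c : nat -> {poly K},
  \sum_(i < m) opact L (c i) (e i) = 0 -> forall i, (i < m)%N -> c i = 0.

Lemma indep_bound : exists n, forall m e, indep m e -> (m <= n)%N.
Proof.
case: hfr => n hn; exists n => m e hi; rewrite leqNgt; apply/negP => hm.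
have [c [[i ci] hc]] := hn (fun i : 'I_n.+1 => e i) (fun=> I).
pose c' j := if (j < n.+1)%N then c (inord j) else 0.
have : \sum_(j < m) opact L (c' j) (e j) = 0.
  have E : \sum_(j < m) opact L (c' j) (e j) =
      \sum_(j < m | (j < n.+1)%N) opact L (c' j) (e j).
    rewrite [RHS]big_mkcond /=; apply: eq_bigr => j _; rewrite /c'.
    by case: ifP => //; rewrite opact0.
  rewrite E -(big_ord_widen m (fun j => opact L (c' j) (e j))) //.
  by apply: etrans hc; apply: eq_bigr => j _; rewrite /c' ltn_ord inord_val.
move/hi => /(_ i (leq_trans (ltn_ord i) hm)).
by rewrite /c' ltn_ord inord_val => /eqP; rewrite (negbTE ci).
Qed.

Lemma max_family : exists r e, indep r e /\ forall m e', indep m e' -> (m <= r)%N.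
Proof.
have [n hn] := indep_bound.
have [r [[e he] hr]] := @max_exists (fun m => exists e, indep m e) n
  (ex_intro _ (fun _ => 0) (fun c _ i hi => False_ind _ (notF hi)))
  (fun m h => let: ex_intro e h' := h in hn m e h').
by exists r, e; split => // m e' h; apply: hr; exists e'.
Qed.

Lemma span_max r e : indep r e -> (forall m e', indep m e' -> (m <= r)%N) ->
  forall v, exists q c, q != 0 /\ opact L q v = \sum_(i < r) opact L (c i) (e i).
Proof.
move=> hi hmax v; pose e' j := if j == r then v else e j.
have : ~ indep r.+1 e' by move/hmax; rewrite ltnn.
move=> H; have [c Hc] := not_all_ex_not _ _ H.
have [hc Hc2] := imply_to_and _ _ Hc.
have [i Hi] := not_all_ex_not _ _ Hc2.
have [hir hci] := imply_to_and _ _ Hi.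
rewrite big_ord_recr /= /e' eqxx in hc.
have Ee : \sum_(j < r) opact L (c j) (e' j) = \sum_(j < r) opact L (c j) (e j).
  by apply: eq_bigr => j _; rewrite /e' ltn_eqF.
rewrite /e' in Ee; rewrite Ee in hc.
case: (c r =P 0) => hcr.
  move: hc; rewrite hcr opact0 addr0 => /hi hz.
  by exfalso; apply: hci; move: hir; rewrite ltnS leq_eqVlt => /orP [/eqP ->|/hz].
exists (c r), (fun j => - c j); split; first by apply/eqP.
move: hc; rewrite addrC => /eqP; rewrite addr_eq0 => /eqP ->.
by rewrite -sumrN; apply: eq_bigr => j _; rewrite opactN.
Qed.




Lemma Ll : islin L. Proof. exact: L_lin. Qed.
Lemma Oml : islin Om. Proof. exact: Om_lin. Qed.
Lemma Lml : islin Lm. Proof. exact: Lm_lin. Qed.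
Lemma Lpl : islin Lp. Proof. exact: Lp_lin. Qed.
Lemma hLO u : L (Om u) = Om (L u). Proof. by rewrite OmL. Qed.

Lemma Pop0v P : Pop L Om P 0 = 0.
Proof. exact: lin0 (Pop_lin Ll Oml P). Qed.

Lemma Pop_opact q P v : Pop L Om P (opact L q v) = opact L q (Pop L Om P v).
Proof.
symmetry; apply: (Pop_comm _ _ (opact_lin Ll q)).
  by move=> u; rewrite (opact_comm _ _ Ll).
by move=> u; rewrite (opact_comm _ _ Oml) // => w; rewrite OmL.
Qed.

Lemma ann_vec v : exists P : {poly {poly K}}, P != 0 /\ Pop L Om P v = 0.
Proof.
case: hfr => n hn.
have [c [[i ci] hc]] := hn (fun i : 'I_n.+1 => iter i Om v) (fun=> I).
exists (\poly_(j < n.+1) c (inord j)); split.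
  apply/eqP => E; move: (congr1 (fun Q : {poly {poly K}} => Q`_i) E) => /=.
  by rewrite coef_poly ltn_ord inord_val coef0 => /eqP; rewrite (negbTE ci).
rewrite (@Pop_size _ _ _ _ n.+1) ?size_poly //.
by apply: etrans hc; apply: eq_bigr => j _; rewrite coef_poly ltn_ord inord_val.
Qed.

Lemma ann_all : exists P : {poly {poly K}}, P != 0 /\ forall v, Pop L Om P v = 0.
Proof.
have [r [e [hi hmax]]] := max_family.
have H k : (k <= r)%N -> exists P : {poly {poly K}},
    P != 0 /\ forall i, (i < k)%N -> Pop L Om P (e i) = 0.
  elim: k => [|k IH] hk; first by exists 1; split; [exact: oner_neq0 | by []].
  have [P [hP0 hP]] := IH (ltnW hk).
  have [Q [hQ0 hQ]] := ann_vec (e k).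
  exists (P * Q); split; first by rewrite mulf_neq0.
  move=> i; rewrite ltnS leq_eqVlt => /orP [/eqP ->|hik].
    by rewrite (PopM Ll Oml hLO) hQ Pop0v.
  by rewrite mulrC (PopM Ll Oml hLO) hP // Pop0v.
have [P [hP0 hP]] := H r (leqnn r).
exists P; split => // v.
have [q [c [hq hqv]]] := span_max hi hmax v.
apply: (tf hq); rewrite -Pop_opact hqv.
rewrite (lin_sum (Pop_lin Ll Oml P)) big1 // => i _.
by rewrite Pop_opact hP // (opactv0 Ll).
Qed.
End Main.

Lemma comb2 (K : fieldType) (V : lmodType K) (a b c : K) (X Y : V) :
  a *: (X + Y) + b *: Y - c *: X = (a - c) *: X + (a + b) *: Y.
Proof.
by rewrite scalerDr scalerBl scalerDl addrAC (addrAC (a *: X)) -addrA.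
Qed.

Section Main2.
Variables (K : numClosedFieldType) (V : lmodType K) (M : sl2mod V)
  (htf : torsion_free M) (hfr : finite_rank M).
Local Notation Lm := (Lm1 M).
Local Notation L := (L0 M).
Local Notation Lp := (L1 M).
Local Notation Om := (casimir M).

Lemma LmLp u : Lm (Lp u) = Lp (Lm u) - 2%:R *: L u.
Proof. by rewrite LpLm addrK. Qed.

Lemma Lm_inj v : Lm v = 0 -> v = 0.
Proof.
move=> hv; apply: NNPP => hv0.
pose vk k := iter k Lp v.
have D1 k : exists b : K, Lm (vk k.+1) = (- (2 * k.+1)%:R) *: L (vk k) + b *: vk k.
  elim: k => [|k [b hb]].
    exists 0; rewrite /vk /= LmLp hv (lin0 (Lpl M)) scale0r addr0 sub0r.
    by rewrite scaleNr.
  exists (- (2 * k.+1)%:R + b).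
  rewrite [vk k.+2]/= LmLp -/(vk k.+1) hb (Lpl M) (linZ (Lpl M)) LpL.
  rewrite -/(vk k.+1) comb2; congr (_ *: _ + _).
  ring.
have D2 k : vk k <> 0.
  elim: k => [//|k IH] hk; apply: IH; have [b hb] := D1 k.
  have hp : (- (2 * k.+1)%:R) *: 'X + b%:P != 0 :> {poly K}.
    apply/eqP => /(congr1 (fun p : {poly K} => p`_1)).
    rewrite coefD coefZ coefX coefC coef0 /= mulr1 addr0 => /eqP.
    by rewrite oppr_eq0 pnatr_eq0 muln_eq0.
  apply: (tf htf hp).
  rewrite (opactD) (opactZ) opactX opactC -hb hk; exact: lin0 (Lml M).
pose qk k : {poly K} := ('X + (k%:R)%:P) * ('X + (k.+1%:R)%:P).
have D3 k : Om (vk k) = opact L (qk k) (vk k).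
  elim: k => [|k IH].
    rewrite /vk /= OmB hv (lin0 (Lpl M)) subr0 /qk (opactM (Ll M)) opactD opactX.
    by rewrite opactC scale0r addr0 opactD opactX opactC scale1r (linD (Ll M)).
  rewrite [vk k.+1]/= OmLp -/(vk k) IH (opact_shift (Ll M) _ _ (Lpl M) (LpL' M)).
  congr opact; rewrite /qk comp_polyM !comp_polyD comp_polyX !comp_polyC.
  by rewrite -!addrA -!polyCD -!mulrS.
have [P [hP0 hP]] := ann_all htf hfr.
have hroot k : P.[qk k] = 0.
  apply: NNPP => /eqP hne; apply: (D2 k); apply: (tf htf hne).
  by rewrite -(Pop_eval (Ll M) (Oml M) (@hLO _ _ M) P (D3 k)) hP.
have qinj : injective qk.
  move=> j k /(congr1 (fun p : {poly K} => p.[0])); rewrite /qk !hornerE /=.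
  rewrite -!natrM => /eqP; rewrite eqr_nat => /eqP E.
  case: (ltngtP j k) => // h.
    by have := ltn_mul h (h : j.+1 < k.+1)%N; rewrite E ltnn.
  by have := ltn_mul h (h : k.+1 < j.+1)%N; rewrite E ltnn.
have := @max_poly_roots _ P (map qk (iota 0 (size P))) hP0.
rewrite size_map size_iota ltnn map_inj_uniq // iota_uniq => H; apply: notF; apply: H => //.
  by apply/allP => x /mapP [k _ ->]; apply/rootP; apply: hroot.
Qed.

End Main2.

Section Main3.
Variables (K : numClosedFieldType) (V : lmodType K) (M : sl2mod V)
  (htf : torsion_free M) (hfr : finite_rank M).
Local Notation Lm := (Lm1 M).
Local Notation L := (L0 M).
Local Notation Lp := (L1 M).
Local Notation Om := (casimir M).

Lemma comp_shift_inv (c : {poly K}) :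
  (c \Po ('X + 1%:P)) \Po ('X + (-1)%:P) = c.
Proof.
by rewrite -comp_polyA comp_polyD comp_polyX comp_polyC -addrA -polyCD addNr addr0 comp_polyXr.
Qed.

Lemma opact_Lm (c : {poly K}) x : opact L c (Lm x) = Lm (opact L (c \Po ('X + 1%:P)) x).
Proof. by rewrite (opact_shift (Ll M) _ _ (Lml M) (LmL' M)) comp_shift_inv. Qed.

Lemma Lm_image v : exists q u, q != 0 /\ opact L q v = Lm u.
Proof.
have [r [e [hi hmax]]] := max_family hfr.
have hi' : indep M r (fun i => Lm (e i)).
  move=> c hc i hir.
  have : \sum_(j < r) opact L (c j \Po ('X + 1%:P)) (e j) = 0.
    apply: (Lm_inj htf hfr); rewrite (lin_sum (Lml M)) -[RHS]hc.
    by apply: eq_bigr => j _; rewrite opact_Lm.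
  move/(hi (fun j => c j \Po ('X + 1%:P))) => /(_ i hir) h.
  by rewrite -(comp_shift_inv (c i)) h comp_poly0.
have [q [c [hq hqv]]] := span_max hi' hmax v.
exists q, (\sum_(j < r) opact L (c j \Po ('X + 1%:P)) (e j)); split => //.
by rewrite hqv (lin_sum (Lml M)); apply: eq_bigr => j _; rewrite opact_Lm.
Qed.

Definition sig (P : {poly {poly K}}) := map_poly (comp_poly ('X + (-1)%:P)) P.

Lemma ann_sig P : (forall v, Pop L Om P v = 0) -> forall v, Pop L Om (sig P) v = 0.
Proof.
move=> hP v; have [q [u [hq hqu]]] := Lm_image v.
apply: (tf htf hq); rewrite -(Pop_opact M) hqu.
rewrite -(Pop_shift (Ll M) P u (Lml M) (LmL' M)); last by move=> w; rewrite OmLm.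
by rewrite hP (lin0 (Lml M)).
Qed.

End Main3.

Section Polys.
Variable (K : numClosedFieldType).

Lemma shift_const (u : {poly K}) : u \Po ('X + (-1)%:P) = u -> u = (u.[0])%:P.
Proof.
move=> hu.
have hk k : u.[- (k%:R)] = u.[0].
  elim: k => [|k IH]; first by rewrite oppr0.
  rewrite -IH -{2}hu horner_comp !hornerE; congr horner; ring.
apply/eqP; rewrite -subr_eq0; apply/negPn/negP => hne.
have := @max_poly_roots _ (u - (u.[0])%:P)
  (map (fun k : nat => - (k%:R : K)) (iota 0 (size (u - u.[0]%:P)))) hne.
rewrite size_map size_iota ltnn map_inj_uniq ?iota_uniq => [H|]; last first.
  by move=> i j /eqP; rewrite eqr_opp eqr_nat => /eqP.
apply: notF; apply: H => //; apply/allP => x /mapP [k _ ->].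
by rewrite rootE !hornerE hk subrr.
Qed.

Lemma shift_size (u : {poly K}) : u != 0 ->
  (size (u - (u \Po ('X + (-1)%:P)))%R < size u)%N.
Proof.
move=> hu.
have hs : size ('X + (-1)%:P : {poly K}) = 2 by rewrite polyCN size_XsubC.
have hsz : size (u \Po ('X + (-1)%:P)) = size u := size_comp_poly2 _ hs.
have hlc : lead_coef (u \Po ('X + (-1)%:P)) = lead_coef u.
  by rewrite lead_coef_comp ?hs // polyCN lead_coefXsubC expr1n mulr1.
have s0 : (0 < size u)%N by rewrite size_poly_gt0.
rewrite -(prednK s0) ltnS; apply/leq_sizeP => j hj.
rewrite coefB; move: hj; rewrite leq_eqVlt => /orP [/eqP <-|hj].
  by rewrite -/(lead_coef u) -hsz -/(lead_coef (u \Po _)) hlc subrr.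
rewrite !nth_default ?hsz ?subrr //; by rewrite -(prednK s0).
Qed.

End Polys.

Section Main4.
Variables (K : numClosedFieldType) (V : lmodType K) (M : sl2mod V)
  (htf : torsion_free M) (hfr : finite_rank M).
Local Notation Lm := (Lm1 M).
Local Notation L := (L0 M).
Local Notation Lp := (L1 M).
Local Notation Om := (casimir M).

Lemma const_ann : exists p : {poly K}, p != 0 /\ forall v, opact Om p v = 0.
Proof.
pose S := fun P : {poly {poly K}} => P != 0 /\ forall v, Pop L Om P v = 0.
have [P0 hP0] := ann_all htf hfr.
have [d [[P1 [hS1 hs1]] hd]] :=
  @min_exists (fun d => exists P, S P /\ size P = d) (ex_intro _ _ (ex_intro _ P0 (conj hP0 erefl))).
have [s [[P [[hS hsize] hs]] hmin]] :=
  @min_exists (fun s => exists P, (S P /\ size P = d) /\ size (lead_coef P) = s)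
    (ex_intro _ _ (ex_intro _ P1 (conj (conj hS1 hs1) erefl))).
case: hS => hP0' hPa.
pose Q := P - sig P.
have hQ v : Pop L Om Q v = 0.
  by rewrite PopB hPa (ann_sig htf hfr hPa) subr0.
have hQc j : Q`_j = P`_j - (P`_j \Po ('X + (-1)%:P)).
  by rewrite coefB coef_map_id0 // comp_poly0.
have d0 : (0 < d)%N by rewrite -hsize size_poly_gt0.
have hQs : (size Q <= d)%N.
  apply/leq_sizeP => j hj; rewrite hQc nth_default ?hsize //.
  by rewrite comp_poly0 subrr.
have ha : lead_coef P = P`_d.-1 by rewrite lead_coefE hsize.
case: (leqP (size (lead_coef P)) 1) => hla.
  have hQ0 : Q = 0.
    apply: NNPP => /eqP hQn.
    have : (d <= size Q)%N by apply: hd; exists Q.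
    rewrite leqNgt => /negP; apply; rewrite -(prednK d0) ltnS.
    apply/leq_sizeP => j; rewrite leq_eqVlt => /orP [/eqP <-|hj].
      rewrite hQc -ha (size1_polyC hla) comp_polyC subrr //.
    by apply/(leq_sizeP _ _ hQs); rewrite -(prednK d0).
  have hPj j : P`_j = ((P`_j).[0])%:P.
    apply: shift_const; apply/eqP; rewrite eq_sym -subr_eq0 -hQc hQ0 coef0 //.
  exists (\poly_(j < d) (P`_j).[0]).
  have hmap : map_poly polyC (\poly_(j < d) (P`_j).[0]) = P.
    apply/polyP => j; rewrite coef_map /= coef_poly.
    case: ifP => hj; first by rewrite -hPj.
    by rewrite nth_default // hsize leqNgt hj.
  split.
    by apply/eqP => E; move: hmap; rewrite E map_poly0 => /esym/eqP; rewrite (negbTE hP0').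
  by move=> v; rewrite -(Pop_const L) hmap hPa.
exfalso.
have hl0 : lead_coef P != 0 by rewrite lead_coef_eq0.
have hne : lead_coef P - (lead_coef P \Po ('X + (-1)%:P)) != 0.
  apply/negP; rewrite subr_eq0 eq_sym => /eqP /shift_const E.
  by move: hla; rewrite E size_polyC; case: (_ != 0).
have hQd : Q`_d.-1 != 0 by rewrite hQc -ha.
have hsQ : size Q = d.
  apply/eqP; rewrite eqn_leq hQs /= -(prednK d0); apply: contraNT hQd.
  by rewrite -leqNgt => /leq_sizeP ->.
have hQn : Q != 0 by apply/eqP => E; move: hQd; rewrite E coef0 eqxx.
have := hmin (size (lead_coef Q)) (ex_intro _ Q (conj (conj (conj hQn hQ) hsQ) erefl)).
by rewrite lead_coefE hsQ hQc -ha -hs leqNgt (shift_size hl0).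
Qed.

End Main4.

Section Decomp.
Variables (F : fieldType) (V : lmodType F) (f : V -> V) (fl : islin f).

Lemma coprime_ker (A B : {poly F}) v : coprimep A B ->
  opact f A v = 0 -> opact f B v = 0 -> v = 0.
Proof.
move=> /Bezout_eq1_coprimepP [[u1 u2] /= hu] hA hB.
by rewrite -(opact1 f v) -hu opactD !(opactM fl) hA hB !(opactv0 fl) addr0.
Qed.

Lemma coprime_split (A B : {poly F}) v : coprimep A B ->
  opact f (A * B) v = 0 -> exists x y, v = x + y /\ opact f A x = 0 /\ opact f B y = 0.
Proof.
move=> /Bezout_eq1_coprimepP [[u1 u2] /= hu] hAB.
exists (opact f (u2 * B) v), (opact f (u1 * A) v); split.
  by rewrite addrC -opactD hu opact1.
split.
  by rewrite -(opactM fl) mulrCA (opactM fl) hAB (opactv0 fl).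
by rewrite -(opactM fl) mulrCA (mulrC B A) (opactM fl) hAB (opactv0 fl).
Qed.

Lemma coprime_XsubCX (a b : F) i j : a != b ->
  coprimep (('X - a%:P) ^+ i) (('X - b%:P) ^+ j).
Proof.
by move=> hab; apply/coprimep_expl/coprimep_expr/coprimep_XsubC2; rewrite subr_eq0 eq_sym.
Qed.

Lemma decomp_list (l : seq F) (e : F -> nat) v : uniq l ->
  opact f (\prod_(m <- l) ('X - m%:P) ^+ e m) v = 0 ->
  exists w : F -> V, (forall m, opact f (('X - m%:P) ^+ e m) (w m) = 0) /\
    v = \sum_(m <- l) w m.
Proof.
elim: l v => [|m l IH] v.
  move=> _; rewrite big_nil opact1 => ->.
  by exists (fun _ => 0); split => [m|]; rewrite ?big_nil // (opactv0 fl).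
rewrite cons_uniq => /andP [ml ul]; rewrite big_cons => h.
have cop : coprimep (('X - m%:P) ^+ e m) (\prod_(m' <- l) ('X - m'%:P) ^+ e m').
  rewrite big_seq; apply: (big_ind (fun x => coprimep _ x)).
  - exact: coprimep1.
  - by move=> x y hx hy; rewrite coprimepMr hx hy.
  move=> m' hm'; apply: coprime_XsubCX; apply/eqP => E; move: ml; by rewrite E hm'.
have [x [y [-> [hx hy]]]] := coprime_split cop h.
have [w [hw ->]] := IH y ul hy.
exists (fun m' => if m' == m then x else w m'); split.
  by move=> m'; case: eqP => [->|].
rewrite big_cons eqxx; congr (_ + _); rewrite big_seq_cond [RHS]big_seq_cond.
apply: eq_bigr => m' /andP [hm' _]; case: eqP => // E; move: ml; by rewrite -E hm'.
Qed.

Lemma decomp_uniq (k : nat) (mu : 'I_k -> F) (n : 'I_k -> nat) (d : 'I_k -> V) :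
  injective mu -> (forall i, opact f (('X - (mu i)%:P) ^+ n i) (d i) = 0) ->
  \sum_i d i = 0 -> forall i, d i = 0.
Proof.
move=> hmu hd hs j.
pose q := \prod_(i | i != j) ('X - (mu i)%:P) ^+ n i.
have hq i : i != j -> opact f q (d i) = 0.
  move=> hij; rewrite /q (bigD1 i) //= mulrC (opactM fl) hd (opactv0 fl) //.
have cop : coprimep (('X - (mu j)%:P) ^+ n j) q.
  apply: (big_ind (fun x => coprimep _ x)).
  - exact: coprimep1.
  - by move=> x y hx hy; rewrite coprimepMr hx hy.
  move=> i hij; apply: coprime_XsubCX; apply/eqP => /hmu E; move: hij; by rewrite E eqxx.
apply: (coprime_ker cop (hd j)).
have := congr1 (opact f q) hs; rewrite (opactv_sum fl) (opactv0 fl) (bigD1 j) //=.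
by rewrite big1 ?addr0 // => i /hq.
Qed.

Lemma iter_XsubC (m : F) n v :
  iter n (fun w => f w - m *: w) v = opact f (('X - m%:P) ^+ n) v.
Proof.
elim: n => [|n IH] /=; first by rewrite expr0 opact1.
by rewrite IH exprS (opactM fl) opactB opactX opactC.
Qed.

End Decomp.

Lemma opact_morph (F : fieldType) (V W : lmodType F) (f : V -> V) (g : W -> W)
  (phi : {linear V -> W}) p v : (forall u, phi (f u) = g (phi u)) ->
  phi (opact f p v) = opact g p (phi v).
Proof.
move=> h; rewrite /opact linear_sum; apply: eq_bigr => i _; rewrite linearZ /=.
by congr (_ *: _); elim: (nat_of_ord i) => [//|j IH] /=; rewrite h IH.
Qed.

Lemma iter_mul_expr (R : nzRingType) (x : R) n : iter n ( *%R x) 1 = x ^+ n.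
Proof. by elim: n => [|n IH] /=; rewrite ?expr0 // IH exprS. Qed.

Section Final.
Variables (K : numClosedFieldType).

Lemma part1 (V : lmodType K) (M : sl2mod V) :
  torsion_free M -> finite_rank M ->
  exists (k : nat) (mu : 'I_k -> K) (W : 'I_k -> V -> Prop),
    injective mu /\
    (forall i, submodule M (W i)) /\
    (forall i, [/\ torsion_free_on M (W i), finite_rank_on M (W i)
                 & gen_casimir_on M (mu i) (W i)]) /\
    direct_sum W.
Proof.
move=> htf hfr.
have [p [hp0 hp]] := const_ann htf hfr.
have [rs hrs] := closed_field_poly_normal p.
pose mus := undup rs; pose e := fun m => count_mem m rs.
have hprod : \prod_(z <- rs) ('X - z%:P) = \prod_(m <- mus) ('X - m%:P) ^+ e m.
  rewrite -big_undup_iterop_count; apply: eq_bigr => m _.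
  by rewrite Monoid.iteropE iter_mul_expr.
have hann v : opact (casimir M) (\prod_(m <- mus) ('X - m%:P) ^+ e m) v = 0.
  have := hp v; rewrite {1}hrs opactZ -hprod => /eqP.
  by rewrite scaler_eq0 lead_coef_eq0 (negbTE hp0) /= => /eqP.
pose mu := fun i : 'I_(size mus) => nth 0 mus i.
pose W := fun (i : 'I_(size mus)) v =>
  opact (casimir M) (('X - (mu i)%:P) ^+ e (mu i)) v = 0.
have hmu : injective mu.
  move=> i j /eqP; rewrite /mu nth_uniq ?undup_uniq // => /eqP; exact: ord_inj.
exists (size mus), mu, W; split => //; split.
  move=> i; split; rewrite /W /=.
  - by rewrite (opactv0 (Oml M)).
  - by move=> a u w hu hw; rewrite (opact_lin (Oml M)) hu hw scaler0 addr0.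
  - by move=> u hu; rewrite -(opact_comm _ _ (Lml M)) ?hu ?(lin0 (Lml M)) // => w; rewrite OmLm.
  - by move=> u hu; rewrite -(opact_comm _ _ (Ll M)) ?hu ?(lin0 (Ll M)) // => w; rewrite OmL.
  - by move=> u hu; rewrite -(opact_comm _ _ (Lpl M)) ?hu ?(lin0 (Lpl M)) // => w; rewrite OmLp.
split.
  move=> i; split.
  - by move=> q v _ hq h; exact: (htf q v I hq h).
  - by case: hfr => n hn; exists n => vv _; exact: hn vv (fun=> I).
  - exists (e (mu i)); split.
      rewrite /e -has_count has_pred1 -mem_undup; exact: mem_nth.
    by move=> v hv; rewrite (iter_XsubC (Oml M)).
split.
  move=> v; have [w [hw hv]] := decomp_list (Oml M) (undup_uniq rs) (hann v).
  exists (fun i => w (mu i)); split => [i|]; first exact: hw.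
  by rewrite hv (big_nth 0) big_mkord.
move=> w w' hw hw' heq i; apply/eqP; rewrite -subr_eq0; apply/eqP.
apply: (decomp_uniq (Oml M) (n := fun i => e (mu i)) (d := fun i => w i - w' i) hmu) => [j|].
  by rewrite (opactvB (Oml M)); move: (hw j) (hw' j); rewrite /W /= => -> ->; rewrite subr0.
by rewrite sumrB heq subrr.
Qed.

Lemma part2 (A B : lmodType K) (MA : sl2mod A) (MB : sl2mod B) (mu nu : K) :
  mu != nu -> gen_casimir MA mu -> gen_casimir MB nu ->
  forall phi : {linear A -> B}, sl2hom MA MB phi -> forall a, phi a = 0.
Proof.
move=> hmn [n [n1 hA]] [m [m1 hB]] phi [h1 h2 h3] a.
have hc u : phi (casimir MA u) = casimir MB (phi u).
  by rewrite /casimir !linearB /= !h2 h1 h3.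
apply: (coprime_ker (Oml MB) (coprime_XsubCX n m hmn)).
  rewrite -(opact_morph _ _ hc) -(iter_XsubC (Oml MA)) (hA a I).
  exact: linear0.
by rewrite -(iter_XsubC (Oml MB)) (hB _ I).
Qed.

End Final.

Unset Implicit Arguments.

Theorem theorem7p9 (R : realType) :
  (forall (V : lmodType (complex R)) (M : sl2mod V),
     torsion_free M -> finite_rank M ->
     exists (k : nat) (mu : 'I_k -> complex R) (W : 'I_k -> V -> Prop),
       injective mu /\
       (forall i, submodule M (W i)) /\
       (forall i, [/\ torsion_free_on M (W i), finite_rank_on M (W i)
                    & gen_casimir_on M (mu i) (W i)]) /\
       direct_sum W) /\
  (forall (A B : lmodType (complex R)) (MA : sl2mod A) (MB : sl2mod B)
          (mu nu : complex R),
     mu != nu ->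
     torsion_free MA -> finite_rank MA -> gen_casimir MA mu ->
     torsion_free MB -> finite_rank MB -> gen_casimir MB nu ->
     forall phi : {linear A -> B}, sl2hom MA MB phi -> forall a, phi a = 0).
Proof.
split.
  by move=> V M; exact: part1.
move=> A B MA MB mu nu hmn _ _ hA _ _ hB; exact: (part2 hmn hA hB).
Qed.
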